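(* Let $k\in\mathbb{R}$, let $\upsilon$ be a multiplier system of weight $k$, and suppose $V$ is a finite-dimensional subspace of the space of moderate-growth holomorphic functions on $\mathbb{H}$ which is invariant under the action $f\mapsto f|_k^\upsilon\gamma$ of $\Gamma$. If $\{f_1,\dots,f_n\}$ is a spanning set for $V$, then there is a representation $\rho:\Gamma\to GL_n(\mathbb{C})$ such that $F=(f_1,\dots,f_n)^t$ satisfies $F|_k^\upsilon\gamma=\rho(\gamma)F$ for all $\gamma\in\Gamma$, i.e. $F\in\mathcal{H}(k,\rho,\upsilon)$.
   Context: $\Gamma=SL(2,\mathbb{Z})$ acts on the upper half-plane $\mathbb{H}$ by Möbius transformations. Complex powers use the principal branch of $\log$. A multiplier system of weight $k$ is a map $\upsilon:\Gamma\to\{|w|=1\}$ such that $\nu(\gamma,z)=\upsilon(\gamma)(cz+d)^k$ ($\gamma=\begin{pmatrix}a&b\\c&d\end{pmatrix}$) satisfies $\nu(\gamma\sigma,z)=\nu(\gamma,\sigma z)\nu(\sigma,z)$. Slash: $(f|_k^\upsilon\gamma)(z)=\upsilon(\gamma)^{-1}(cz+d)^{-k}f(\gamma z)$, applied componentwise to vectors. Moderate growth: $|f(x+iy)|\le y^N$ for $y>c$, some $N,c>0$. $\mathcal{H}(k,\rho,\upsilon)$: column vectors of holomorphic moderate-growth functions $F$ with $F|_k^\upsilon\gamma=\rho(\gamma)F$ for all $\gamma$. *)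

(* Defs.v *)
From HB Require Import structures.
From mathcomp Require Import all_boot all_order all_algebra.
From mathcomp Require Import all_classical all_reals all_analysis.
From mathcomp Require Import complex.
Set Implicit Arguments. Unset Strict Implicit. Unset Printing Implicit Defensive.
Import Order.TTheory GRing.Theory Num.Theory.
Import numFieldNormedType.Exports.
Local Open Scope ring_scope.
Local Open Scope complex_scope.

Section Defs.
Variable R : realType.

Definition cre (z : R[i]) : R := complex.Re z.
Definition cim (z : R[i]) : R := complex.Im z.
Definition cabs (z : R[i]) : R := Num.sqrt (cre z ^+ 2 + cim z ^+ 2).

Definition upper (z : R[i]) : Prop := 0 < cim z.

(* principal argument, with values in (-pi, pi] (Arg 0 := 0, never used) *)
Definition Arg (z : R[i]) : R :=
  let x := cre z in let y := cim z in
  if 0 < x then atan (y / x)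
  else if x < 0 then (if 0 <= y then atan (y / x) + pi else atan (y / x) - pi)
  else if 0 < y then pi / 2 else if y < 0 then - (pi / 2) else 0.

(* principal-branch complex power w^k = exp(k Log w), w <> 0, k real *)
Definition cpow (w : R[i]) (k : R) : R[i] :=
  let r := powR (cabs w) k in
  (r * cos (k * Arg w)) +i* (r * sin (k * Arg w)).

(* Gamma = SL(2,Z), as integer 2x2 matrices of determinant 1 *)
Definition inSL2Z (g : 'M[int]_2) : Prop := \det g = 1.

Definition ma (g : 'M[int]_2) : R[i] := (g ord0 ord0)%:~R.
Definition mb (g : 'M[int]_2) : R[i] := (g ord0 ord_max)%:~R.
Definition mc (g : 'M[int]_2) : R[i] := (g ord_max ord0)%:~R.
Definition md (g : 'M[int]_2) : R[i] := (g ord_max ord_max)%:~R.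

Definition mob (g : 'M[int]_2) (z : R[i]) : R[i] :=
  (ma g * z + mb g) / (mc g * z + md g).

Definition is_multiplier_system (k : R) (ups : 'M[int]_2 -> R[i]) : Prop :=
  (forall g, inSL2Z g -> cabs (ups g) = 1) /\
  (forall g s z, inSL2Z g -> inSL2Z s -> upper z ->
     ups (g *m s) * cpow (mc (g *m s) * z + md (g *m s)) k =
     (ups g * cpow (mc g * mob s z + md g) k) *
     (ups s * cpow (mc s * z + md s) k)).

Definition slash (k : R) (ups : 'M[int]_2 -> R[i]) (f : R[i] -> R[i])
  (g : 'M[int]_2) : R[i] -> R[i] :=
  fun z => (ups g)^-1 * (cpow (mc g * z + md g) k)^-1 * f (mob g z).

(* holomorphic on the upper half-plane (complex differentiability) *)
Definition holo_on_H (f : R[i] -> R[i]) : Prop :=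
  forall z : R[i], upper z -> derivable (f : R[i]^o -> R[i]^o) z 1.

Definition moderate_growth (f : R[i] -> R[i]) : Prop :=
  exists N c : R, 0 < N /\ 0 < c /\
    forall x y : R, c < y -> cabs (f (x +i* y)) <= powR y N.

Definition eqH (f g : R[i] -> R[i]) : Prop := forall z, upper z -> f z = g z.

Definition is_subspace (V : set (R[i] -> R[i])) : Prop :=
  V (fun _ => 0) /\
  (forall f g, V f -> V g -> V (fun z => f z + g z)) /\
  (forall (a : R[i]) f, V f -> V (fun z => a * f z)).

Definition spans (n : nat) (f : 'I_n -> R[i] -> R[i]) (V : set (R[i] -> R[i])) :
  Prop :=
  (forall i, V (f i)) /\
  (forall g, V g -> exists c : 'I_n -> R[i],
     eqH g (fun z => \sum_(i < n) c i * f i z)).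

Definition is_rep (n : nat) (rho : 'M[int]_2 -> 'M[R[i]]_n) : Prop :=
  (forall g, inSL2Z g -> rho g \in unitmx) /\
  (forall g s, inSL2Z g -> inSL2Z s -> rho (g *m s) = rho g *m rho s).

Definition in_H_space (n : nat) (k : R) (rho : 'M[int]_2 -> 'M[R[i]]_n)
  (ups : 'M[int]_2 -> R[i]) (F : 'I_n -> R[i] -> R[i]) : Prop :=
  (forall i, holo_on_H (F i) /\ moderate_growth (F i)) /\
  (forall g, inSL2Z g -> forall i,
     eqH (slash k ups (F i) g) (fun z => \sum_(j < n) rho g i j * F j z)).

End Defs.

(* Main.v *)
Require Import Defs.
From HB Require Import structures.
From mathcomp Require Import all_boot all_order all_algebra.
From mathcomp Require Import all_classical all_reals all_analysis.
From mathcomp Require Import complex.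
From mathcomp Require Import ring lra zify.
Import Order.TTheory GRing.Theory Num.Theory.
Import numFieldNormedType.Exports.
Local Open Scope ring_scope.
Local Open Scope complex_scope.
Set Implicit Arguments. Unset Strict Implicit.

Lemma det22 (g : 'M[int]_2) : \det g = g ord0 ord0 * g ord_max ord_max - g ord0 ord_max * g ord_max ord0.
Proof.
rewrite (expand_det_row _ ord0) !big_ord_recl big_ord0 /cofactor !det_mx11 !mxE /=.
rewrite expr0 mul1r addr0.
rewrite /= expr1 mulN1r mulrN.
congr (_ * g _ _ - _ * g _ _); rewrite /=; try (apply/eqP; done). by congr (g _ _); apply/eqP.
Qed.

Lemma mul22 (g s : 'M[int]_2) i j : (g *m s) i j = g i ord0 * s ord0 j + g i ord_max * s ord_max j.
Proof.
rewrite mxE !big_ord_recl big_ord0 addr0.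
have e2 : lift ord0 ord0 = ord_max :> 'I_2 by apply: val_inj.
by rewrite e2.
Qed.

Section S.
Variable R : realType.
Notation C := R[i].

Lemma intC (m : int) : (m%:~R : C) = (m%:~R : R)%:C.
Proof. by rewrite rmorph_int. Qed.

Lemma jnz (g : 'M[int]_2) (z : C) : inSL2Z g -> upper z -> mc R g * z + md R g != 0.
Proof.
rewrite /inSL2Z det22 /upper /cim /mc /md => hd.
case: z => x y /= hy.
rewrite !intC; apply/eqP => /eqP; rewrite eq_complex /= => /andP[/eqP h1 /eqP h2].
move: h2; rewrite mul0r !addr0 => /eqP; rewrite mulf_eq0 (gt_eqF hy) orbF intr_eq0 => /eqP hc.
move: h1; rewrite hc !mul0r subrr add0r => /eqP; rewrite intr_eq0 => /eqP hd0.
by move: hd; rewrite hc hd0 !mulr0 subrr.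
Qed.
Lemma Im_div (p1 p2 q1 q2 : R) : complex.Im ((p1 +i* p2) / (q1 +i* q2)) = (p2 * q1 - p1 * q2) / (q1 ^+ 2 + q2 ^+ 2).
Proof.
by rewrite /= mulrBl mulrN addrC !mulrA.
Qed.

Lemma sqr2_gt0 (r s : R) : r +i* s != 0 -> 0 < r ^+ 2 + s ^+ 2.
Proof.
move=> h; rewrite lt_neqAle addr_ge0 ?sqr_ge0 // andbT eq_sym paddr_eq0 ?sqr_ge0 // !sqrf_eq0.
apply: contra h => /andP[/eqP -> /eqP ->]; done.
Qed.

Lemma mob_upper (g : 'M[int]_2) (z : R[i]) : inSL2Z g -> upper z -> upper (mob g z).
Proof.
move=> hg hz; have := jnz hg hz.
move: hg hz; rewrite /inSL2Z det22 /upper /cim /mob /ma /mb /mc /md => hd.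
case: z => x y /= hy.
rewrite !intC /=; simpc => hq.
have hn := sqr2_gt0 hq.
have := congr1 (fun m : int => m%:~R : R) hd; rewrite /= intrB !intrM => hd'.
move: hn hd'.
set a := (g ord0 ord0)%:~R; set b := (g ord0 ord_max)%:~R.
set c := (g ord_max ord0)%:~R; set d := (g ord_max ord_max)%:~R.
set n := _ + _ => hn hd'.
rewrite !mulrA -mulNr -mulrDl divr_gt0 //.
have -> : - ((a * x + b) * c * y) + a * y * (c * x + d) = y * (a * d - b * c) by ring.
by rewrite hd' mulr1.
Qed.

Lemma mob_mul (g s : 'M[int]_2) (z : R[i]) : inSL2Z s -> upper z ->
  mob (g *m s) z = mob g (mob s z).
Proof.
move=> hs hz; have hD := jnz hs hz.
rewrite /mob /ma /mb /mc /md !mul22 !intrD !intrM.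
move: hD.
set a := ((s ord0 ord0)%:~R : R[i]); set b := ((s ord0 ord_max)%:~R : R[i]).
set c := ((s ord_max ord0)%:~R : R[i]); set d := ((s ord_max ord_max)%:~R : R[i]).
set A := ((g ord0 ord0)%:~R : R[i]); set B := ((g ord0 ord_max)%:~R : R[i]).
set C' := ((g ord_max ord0)%:~R : R[i]); set D := ((g ord_max ord_max)%:~R : R[i]).
move=> hD.
have -> : A * ((a * z + b) / (c * z + d)) + B = (A * (a * z + b) + B * (c * z + d)) / (c * z + d).
  by field.
have -> : C' * ((a * z + b) / (c * z + d)) + D = (C' * (a * z + b) + D * (c * z + d)) / (c * z + d).
  by field.
rewrite invf_div mulrA divfK //.
congr (_ / _); ring.
Qed.
End S.

Section K.
Variables (F : fieldType) (n : nat) (S : 'rV[F]_n -> Prop).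
Hypotheses (S0 : S 0) (SD : forall u v, S u -> S v -> S (u + v))
  (SZ' : forall (a : F) u, S u -> S (a *: u)).

Lemma kernel_mx_aux d : forall A : 'M[F]_n, (forall x : 'rV_n, (x <= A)%MS -> S x) ->
  (n - \rank A <= d)%N -> exists Km : 'M[F]_n, forall c : 'rV_n, (c <= Km)%MS <-> S c.
Proof.
elim: d => [|d IH] A gA hd.
  exists A => c; split; first exact: gA.
  move=> _; apply: submx_full; rewrite /row_full eqn_leq rank_leq_col /=.
  by rewrite -subn_eq0 -leqn0.
have [all|] := pselect (forall c : 'rV_n, S c -> (c <= A)%MS).
  by exists A => c; split; [exact: gA | exact: all].
move=> /existsNP [c /not_implyP [Sc ncA]].
apply: (IH (A + c)%MS).
  move=> x /sub_addsmxP [u ->]; apply: SD.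
    by apply: gA; apply: submxMl.
  by rewrite [u.2]mx11_scalar mul_scalar_mx; apply: SZ'.
have: (A < A + c)%MS.
  by rewrite ltmxE addsmxSl /= addsmx_sub submx_refl /=; apply/negP.
rewrite ltmxErank => /andP[_ hr].
have := rank_leq_col (A + c)%MS.
move: hd hr; lia.
Qed.
End K.

Section M.
Variable R : realType.

Lemma kernel_mx (F : fieldType) (n : nat) (S : 'rV[F]_n -> Prop) :
  S 0 -> (forall u v, S u -> S v -> S (u + v)) -> (forall (a : F) u, S u -> S (a *: u)) ->
  exists Km : 'M[F]_n, forall c : 'rV_n, (c <= Km)%MS <-> S c.
Proof.
move=> S0 SD SZ; apply: (kernel_mx_aux SD SZ (d:=n) (A:=0)).
  by move=> x; rewrite submx0 => /eqP ->.
exact: leq_subr.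
Qed.

Lemma cpow1 (k : R) : cpow 1 k = 1.
Proof.
rewrite /cpow /cabs /Arg /cre /cim /=.
rewrite ltr01 mul0r atan0 mulr0 cos0 sin0 expr0n /= addr0 expr1n sqrtr1 powR1 !mulr1 mulr0.
done.
Qed.

Lemma ups1 (k : R) ups : is_multiplier_system k ups -> ups 1%:M = 1.
Proof.
case=> habs hco.
have h1 : inSL2Z (1%:M : 'M[int]_2) by rewrite /inSL2Z det1.
have hi : upper ('i : R[i]) by rewrite /upper /cim /= ltr01.
have := hco _ _ 'i h1 h1 hi.
rewrite mul1mx /mc /md !mxE /= (_ : (0%:~R : R[i]) = 0) // (_ : (1%:~R : R[i]) = 1) // !mul0r !add0r cpow1 !mulr1 => hu.
have hnz : ups 1%:M != 0.
  apply/eqP => h0; move: (habs _ h1); rewrite h0 /cabs /cre /cim /= expr0n /= addr0 sqrtr0.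
  by move/eqP; rewrite eq_sym oner_eq0.
by apply: (mulIf hnz); rewrite mul1r -hu.
Qed.

Lemma slash_mul k ups (f : R[i] -> R[i]) g s z : is_multiplier_system k ups ->
  inSL2Z g -> inSL2Z s -> upper z ->
  slash k ups (slash k ups f g) s z = slash k ups f (g *m s) z.
Proof.
case=> _ hco hg hs hz; rewrite /slash (mob_mul g hs hz).
have := hco g s z hg hs hz.
set X := mob g (mob s z).
move=> e; rewrite -[X in _ = X * _]invfM e !invfM.
ring.
Qed.

Lemma slash_eqH k ups (f h : R[i] -> R[i]) g : inSL2Z g -> eqH f h ->
  eqH (slash k ups f g) (slash k ups h g).
Proof. by move=> hg e z hz; rewrite /slash e //; apply: mob_upper. Qed.

Lemma slash_sum k ups n (a : 'I_n -> R[i]) (h : 'I_n -> R[i] -> R[i]) g z :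
  slash k ups (fun w => \sum_i a i * h i w) g z = \sum_i a i * slash k ups (h i) g z.
Proof.
rewrite /slash mulr_sumr; apply: eq_bigr => i _; ring.
Qed.

Lemma slash_id k ups (f : R[i] -> R[i]) z : is_multiplier_system k ups ->
  slash k ups f 1%:M z = f z.
Proof.
move=> hm; rewrite /slash (ups1 hm) /mob /ma /mb /mc /md !mxE /=.
rewrite (_ : (0%:~R : R[i]) = 0) // (_ : (1%:~R : R[i]) = 1) //.
by rewrite !mul0r !add0r mul1r addr0 cpow1 invr1 !mul1r mulr1.
Qed.

Definition fv n (f : 'I_n -> R[i] -> R[i]) (c : 'rV[R[i]]_n) : R[i] -> R[i] :=
  fun z => \sum_j c 0 j * f j z.

Lemma fvD n (f : 'I_n -> R[i] -> R[i]) u v z : fv f (u + v) z = fv f u z + fv f v z.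
Proof. by rewrite /fv -big_split; apply: eq_bigr => j _; rewrite mxE mulrDl. Qed.

Lemma fvB n (f : 'I_n -> R[i] -> R[i]) u v z : fv f (u - v) z = fv f u z - fv f v z.
Proof.
rewrite /fv -sumrB; apply: eq_bigr => j _; rewrite !mxE mulrBl //.
Qed.

Lemma fvZ n (f : 'I_n -> R[i] -> R[i]) a u z : fv f (a *: u) z = a * fv f u z.
Proof. by rewrite /fv mulr_sumr; apply: eq_bigr => j _; rewrite mxE mulrA. Qed.

Lemma fvM n (f : 'I_n -> R[i] -> R[i]) (x : 'rV_n) (M : 'M[R[i]]_n) z :
  fv f (x *m M) z = \sum_(l < n) x 0 l * fv f (row l M) z.
Proof.
rewrite /fv; under eq_bigr do rewrite mxE mulr_suml.
rewrite exchange_big /=; apply: eq_bigr => l _; rewrite mulr_sumr.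
by apply: eq_bigr => j _; rewrite mxE mulrA.
Qed.

Lemma fv_row n (f : 'I_n -> R[i] -> R[i]) (M : 'M[R[i]]_n) i z :
  fv f (row i M) z = \sum_j M i j * f j z.
Proof. by rewrite /fv; apply: eq_bigr => j _; rewrite mxE. Qed.

Lemma fv_delta n (f : 'I_n -> R[i] -> R[i]) i z : fv f (delta_mx 0 i) z = f i z.
Proof.
rewrite /fv (bigD1 i) //= big1 ?addr0; first by rewrite mxE !eqxx mul1r.
by move=> j hj; rewrite mxE eqxx /= (negbTE hj) mul0r.
Qed.
End M.

Local Close Scope complex_scope.

Theorem proposition2p14 (R : realType) (k : R) (ups : 'M[int]_2 -> R[i])
  (V : set (R[i] -> R[i])) (n : nat) (f : 'I_n -> R[i] -> R[i]) :
  is_multiplier_system k ups ->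
  is_subspace V ->
  (forall g, V g -> holo_on_H g /\ moderate_growth g) ->
  (forall g gam, inSL2Z gam -> V g -> V (slash k ups g gam)) ->
  spans f V ->
  exists rho : 'M[int]_2 -> 'M[R[i]]_n, is_rep rho /\ in_H_space k rho ups f.
Proof.
move=> hm hV hHM hinv [fV fspan].
have [Km hK] : exists Km : 'M[R[i]]_n, forall c : 'rV_n,
    (c <= Km)%MS <-> eqH (fv f c) (fun=> 0).
  apply: kernel_mx.
  - by move=> z _; rewrite /fv big1 // => j _; rewrite mxE mul0r.
  - by move=> u v hu hv z hz; rewrite fvD hu // hv // addr0.
  - by move=> a u hu z hz; rewrite fvZ hu // mulr0.
set L := (Km^C)%MS.
set P := proj_mx L Km.
have dx : (L :&: Km = 0)%MS by rewrite capmxC capmx_compl.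
have hPsub : forall x : 'rV_n, (x *m P <= L)%MS by move=> x; apply: proj_mx_sub.
have hPc : forall x : 'rV_n, (x - x *m P <= Km)%MS.
  move=> x; apply: proj_mx_compl_sub; apply: submx_full; rewrite /L addsmxC.
  exact: addsmx_compl_full.
have PP : P *m P = P := proj_mx_proj dx.
clearbody P; clearbody L.
have K1 : forall x : 'rV_n, eqH (fv f (x *m P)) (fv f x).
  move=> x z hz; have := hPc x.
  move/hK => /(_ z hz); rewrite fvB => /eqP; rewrite subr_eq0 => /eqP ->.
  done.
have K2 : forall u v : 'rV_n, (u <= L)%MS -> (v <= L)%MS -> eqH (fv f u) (fv f v) -> u = v.
  move=> u v hu hv e; apply/eqP; rewrite -subr_eq0 -submx0 -dx sub_capmx.
  rewrite addmx_sub ?eqmx_opp //=; apply/hK => z hz; rewrite fvB e // subrr.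
  done.
have hA : forall g, exists A : 'M[R[i]]_n, inSL2Z g ->
    forall i, eqH (slash k ups (f i) g) (fv f (row i A)).
  move=> g; have [hg|hg] := pselect (inSL2Z g); last by exists 0.
  have : forall i, exists c : 'I_n -> R[i],
      eqH (slash k ups (f i) g) (fun z => \sum_(j < n) c j * f j z).
    by move=> i; apply: fspan; apply: hinv => //; apply: fV.
  move=> /choice [cc hcc]; exists (\matrix_(i, j) cc i j) => _ i z hz.
  by rewrite hcc // fv_row; apply: eq_bigr => j _; rewrite mxE.
have /choice [Af hAf] := hA.
have K4 : forall g (x : 'rV_n), inSL2Z g ->
    eqH (fv f (x *m Af g)) (slash k ups (fv f x) g).
  move=> g x hg z hz; rewrite fvM.
  rewrite (_ : slash k ups (fv f x) g z = \sum_(l < n) x 0 l * slash k ups (f l) g z).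
    by apply: eq_bigr => l _; rewrite (hAf g hg l z hz).
  exact: (slash_sum k ups (fun j => x 0 j) f g z).
set Q : 'M[R[i]]_n := 1%:M - P.
have PQ : P *m Q = 0 by rewrite mulmxBr mulmx1 PP subrr.
have QP : Q *m P = 0 by rewrite mulmxBl mul1mx PP subrr.
have QQ : Q *m Q = Q by rewrite mulmxBr mulmx1 QP subr0.
have XPP : forall X : 'M[R[i]]_n, X *m P *m P = X *m P by move=> X; rewrite -mulmxA PP.
have XPQ : forall X : 'M[R[i]]_n, X *m P *m Q = 0 by move=> X; rewrite -mulmxA PQ mulmx0.
have XQP : forall X : 'M[R[i]]_n, X *m Q *m P = 0 by move=> X; rewrite -mulmxA QP mulmx0.
have hQ : Q = 1%:M - P by [].
clearbody Q.
pose rho g := P *m Af g *m P + Q.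
have xrho : forall g (x : 'rV_n), x *m rho g = x *m P *m Af g *m P + (x - x *m P).
  by move=> g x; rewrite /rho hQ mulmxDr mulmxBr mulmx1 !mulmxA.
have K6 : forall g (x : 'rV_n), inSL2Z g -> eqH (fv f (x *m rho g)) (slash k ups (fv f x) g).
  move=> g x hg z hz; rewrite xrho fvD fvB K1 // K1 // subrr addr0.
  rewrite K4 //; apply: slash_eqH => //; exact: K1.
have eqrow : forall M N : 'M[R[i]]_n, (forall x : 'rV_n, x *m M = x *m N) -> M = N.
  by move=> M N h; apply/row_matrixP => i; rewrite !rowE.
have key : forall g s, inSL2Z g -> inSL2Z s ->
    P *m Af g *m P *m Af s *m P = P *m Af (g *m s) *m P.
  move=> g s hg hs; have hgs : inSL2Z (g *m s) by rewrite /inSL2Z det_mulmx hg hs mulr1.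
  apply: eqrow => x.
  have e : eqH (fv f (x *m P *m Af g *m P *m Af s *m P)) (fv f (x *m P *m Af (g *m s) *m P)).
    move=> z hz.
    transitivity (slash k ups (fv f (x *m P)) (g *m s) z); last first.
      symmetry; etransitivity; first exact: (K1 _ z hz).
      exact: (K4 _ _ hgs z hz).
    etransitivity; first exact: (K1 _ z hz).
    etransitivity; first exact: (K4 _ _ hs z hz).
    rewrite -(slash_mul _ hm hg hs hz).
    apply: slash_eqH => // w hw.
    etransitivity; first exact: (K1 _ w hw).
    exact: (K4 _ _ hg w hw).
  by rewrite !mulmxA; apply: K2 e; rewrite hPsub.
have rho1 : rho 1%:M = 1%:M.
  have h1 : inSL2Z (1%:M : 'M[int]_2) by rewrite /inSL2Z det1.
  rewrite /rho; have -> : P *m Af 1%:M *m P = P.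
    apply: eqrow => x.
    have e : eqH (fv f (x *m P *m Af 1%:M *m P)) (fv f (x *m P)).
      move=> z hz.
      etransitivity; first exact: (K1 _ z hz).
      etransitivity; first exact: (K4 _ _ h1 z hz).
      exact: slash_id.
    by rewrite !mulmxA; apply: K2 e; rewrite hPsub.
  by rewrite hQ addrC subrK.
have rhoM : forall g s, inSL2Z g -> inSL2Z s -> rho (g *m s) = rho g *m rho s.
  move=> g s hg hs; rewrite /rho mulmxDl !mulmxDr !mulmxA XPQ QQ -(key _ _ hg hs).
  by rewrite XPP QP !mul0mx addr0 add0r.
exists rho; split; first split.
- move=> g hg.
  have hadj : g *m \adj g = 1%:M by rewrite mul_mx_adj hg.
  have hadj' : inSL2Z (\adj g).
    have := congr1 determinant hadj; rewrite det_mulmx det1 hg mul1r.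
    by [].
  have := rhoM _ _ hg hadj'; rewrite hadj rho1 => e.
  by have [] := mulmx1_unit (esym e).
- exact: rhoM.
split.
  by move=> i; apply: hHM; apply: fV.
move=> g hg i z hz.
rewrite -fv_row rowE.
symmetry; etransitivity; first exact: (K6 _ _ hg z hz).
by rewrite /slash fv_delta.
Qed.
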